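(* Let $T$ be a measure-preserving automorphism of a standard probability Borel space $(X,\mathcal{B},\mu)$, let $\{W_n\}_{n\in\mathbb{N}}$ be measurable subsets of $X$ and let $\{q_n\}_{n\in\mathbb{N}}$ be an increasing sequence of natural numbers. Then $\{q_n\}$ is a rigidity sequence for $T$ along $\{W_n\}$ if and only if for every $f\in L^1(X,\mathcal{B},\mu)$ we have $\chi_{W_n}(f\circ T^{q_n}-f)\to 0$ in measure.
   Context: $\{q_n\}$ is a rigidity sequence for $T$ along $\{W_n\}$ if $\mu((T^{-q_n}A\,\triangle\, A)\cap W_n)\to 0$ for every $A\in\mathcal{B}$. $\chi_W$ denotes the indicator function of $W$. *)

(* Defs.v *)
From HB Require Import structures.
From mathcomp Require Import all_boot all_order all_algebra.
From mathcomp Require Import all_classical all_reals all_analysis.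
Set Implicit Arguments. Unset Strict Implicit. Unset Printing Implicit Defensive.
Import Order.TTheory GRing.Theory Num.Theory.
Local Open Scope classical_set_scope.
Local Open Scope ring_scope.

(* Standard Borel space (via Kuratowski's theorem): the measurable space X is
   Borel-isomorphic to a Borel subset B of the real line, i.e. there is a
   bijection phi : X -> B that is measurable and maps measurable sets to
   Borel sets. *)
Definition standard_borel d (X : measurableType d) (R : realType) : Prop :=
  exists (B : set (measurableTypeR R)) (phi : X -> measurableTypeR R),
    [/\ measurable B, set_bij setT B phi, measurable_fun setT phi
      & forall A : set X, measurable A -> measurable (phi @` A)].

Definition mp_automorphism d (X : measurableType d) (R : realType)
    (mu : {measure set X -> \bar R}) (T : X -> X) : Prop :=
  [/\ bijective T, measurable_fun setT T,
      (forall A : set X, measurable A -> measurable (T @` A))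
    & forall A : set X, measurable A -> mu (T @^-1` A) = mu A].

Definition rigidity_along d (X : measurableType d) (R : realType)
    (mu : {measure set X -> \bar R}) (T : X -> X) (q : nat -> nat)
    (W : nat -> set X) : Prop :=
  forall A : set X, measurable A ->
    (fun n => mu ((((iter (q n) T) @^-1` A) `+` A) `&` W n)) @ \oo --> 0%E.

Definition cvg_in_measure_to0 d (X : measurableType d) (R : realType)
    (mu : {measure set X -> \bar R}) (g : nat -> X -> R) : Prop :=
  forall eps : R, 0 < eps ->
    (fun n => mu [set x | eps <= `|g n x|]) @ \oo --> 0%E.

Definition chi (X : Type) (R : realType) (W : set X) (x : X) : R :=
  if `[< W x >] then 1 else 0.

(* Main.v *)
Require Import Defs.
From HB Require Import structures.
From mathcomp Require Import all_boot all_order all_algebra.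
From mathcomp Require Import all_classical all_reals all_analysis.
From mathcomp Require Import lra measurable_realfun lebesgue_integral.
Import Order.TTheory GRing.Theory Num.Theory.
Local Open Scope classical_set_scope.
Local Open Scope ring_scope.

Section H.
Context (R : realType).

Lemma ev_le_cvg0 (u : nat -> \bar R) : (forall n, 0 <= u n)%E ->
  (forall e : R, 0 < e -> \forall n \near \oo, (u n <= e%:E)%E) ->
  u @ \oo --> 0%E.
Proof.
move=> u0 H; apply/fine_cvgP; split.
  apply: filterS (H 1 ltr01) => n un1.
  by rewrite ge0_fin_numE ?u0 // (le_lt_trans un1) // ltry.
apply/cvgrPdist_le => e e0; apply: filterS (H e e0) => n une /=.
rewrite sub0r normrN ger0_norm ?fine_ge0 ?u0 //.
have : (u n \is a fin_num) by rewrite ge0_fin_numE ?u0 // (le_lt_trans une) // ltry.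
by move/fineK => E; rewrite -lee_fin E.
Qed.

Lemma cvg0_ev_le (u : nat -> \bar R) : (forall n, 0 <= u n)%E ->
  u @ \oo --> 0%E ->
  (forall e : R, 0 < e -> \forall n \near \oo, (u n <= e%:E)%E).
Proof.
move=> u0 /fine_cvgP [fu /cvgrPdist_le cu] e e0.
apply: filterS2 fu (cu e e0) => n fn /=.
rewrite sub0r normrN ger0_norm ?fine_ge0 ?u0 // => h.
by rewrite -(fineK fn) lee_fin.
Qed.
End H.

Arguments ev_le_cvg0 {R u}.
Arguments cvg0_ev_le {R u}.

Section H2.
Context d (X : measurableType d) (R : realType) (mu : probability X R).

Lemma iter_mfun (T : X -> X) : measurable_fun setT T -> forall n, measurable_fun setT (iter n T).
Proof.
move=> mT; elim=> [|n IH] /=; first exact: measurable_id.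
exact: measurableT_comp.
Qed.

Lemma pre_meas (g : X -> X) A : measurable_fun setT g -> measurable A -> measurable (g @^-1` A).
Proof. by move=> mg mA; rewrite -[_ @^-1` _]setTI; apply: mg. Qed.

Lemma iter_pres (T : X -> X) : measurable_fun setT T ->
  (forall A, measurable A -> mu (T @^-1` A) = mu A) ->
  forall n A, measurable A -> mu (iter n T @^-1` A) = mu A.
Proof.
move=> mT pT; elim=> [|n IH] A mA //=.
have -> : (fun x => T (iter n T x)) @^-1` A = iter n T @^-1` (T @^-1` A) by [].
rewrite IH ?pT //; exact: pre_meas.
Qed.

Lemma union_small (S : nat -> nat -> set X) N : (forall j n, measurable (S j n)) ->
  (forall j, (fun n => mu (S j n)) @ \oo --> 0%E) ->
  (fun n => mu (\big[setU/set0]_(j < N) S j n)) @ \oo --> 0%E.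
Proof.
move=> mS cS; elim: N => [|N IH].
  under eq_fun do rewrite big_ord0 measure0; exact: cvg_cst.
apply: ev_le_cvg0 => // e e0.
have e2 : 0 < e / 2 by rewrite divr_gt0.
have h1 := cvg0_ev_le (fun n => measure_ge0 _ _) IH _ e2.
have h2 := cvg0_ev_le (fun n => measure_ge0 _ _) (cS N) _ e2.
apply: filterS2 h1 h2 => n h1 h2.
rewrite big_ord_recr /=.
have mB : measurable (\big[setU/set0]_(j < N) S j n).
  elim/big_ind: _ => //; exact: measurableU.
apply: (le_trans (measureU2 _ mB (mS N n))).
by rewrite [e](splitr e) EFinD leeD.
Qed.

End H2.

Arguments iter_mfun {d X T}.
Arguments pre_meas {d X g A}.
Arguments iter_pres {d X R mu T}.
Arguments union_small {d X R mu S N}.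

Lemma grid (R : realType) (eps : R) (K : nat) (a b : R) : 0 < eps ->
  -(K%:R*eps) < a -> a + eps <= b -> b < K%:R*eps ->
  exists j, (j < 2*K)%N /\ a < -(K%:R*eps) + j%:R*eps <= b.
Proof.
move=> e0 ha hab hb.
have y0 : 0 <= (a + K%:R * eps) / eps.
  rewrite divr_ge0 //; lra.
have /andP[t1 t2] := truncn_itv y0.
set t := Num.truncn _ in t1 t2.
have E1 : t%:R * eps <= a + K%:R * eps by rewrite -ler_pdivlMr.
have E2 : a + K%:R * eps < t.+1%:R * eps by rewrite -ltr_pdivrMr.
exists t.+1; split; last first.
  apply/andP; split; first lra.
  move: E1; rewrite -addn1 natrD mulrDl mul1r; lra.
have : t.+1%:R * eps < (2 * K)%:R * eps.
  move: E1; rewrite -addn1 natrD mulrDl mul1r natrM -mulrA; lra.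
by rewrite ltr_pM2r // ltr_nat.
Qed.
Arguments grid {R eps K a b}.



Section H4.
Context d (X : measurableType d) (R : realType) (mu : probability X R).

Lemma meas_ge (h : X -> R) c : measurable_fun setT h -> measurable [set x | c <= h x].
Proof.
move=> mh; have := mh measurableT _ (measurable_itv `[c, +oo[); rewrite setTI.
congr measurable; apply/seteqP; split=> x /=; by rewrite in_itv /= andbT.
Qed.

Lemma meas_lt (h : X -> R) c : measurable_fun setT h -> measurable [set x | h x < c].
Proof.
move=> mh; have := mh measurableT _ (measurable_itv `]-oo, c[); rewrite setTI.
congr measurable; apply/seteqP; split=> x /=; by rewrite in_itv /=.
Qed.

Lemma bad_small (f : X -> R) (eps e : R) : measurable_fun setT f -> 0 < eps -> 0 < e ->
  exists K : nat, (mu [set x | (K%:R * eps <= `|f x|)%R] <= e%:E)%E.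
Proof.
move=> mf e0 ee.
pose F n := [set x | n%:R * eps <= `|f x|].
have mF n : measurable (F n) by apply: meas_ge; exact: measurableT_comp.
have niF : nonincreasing_seq F.
  move=> n m nm; apply/subsetPset => x; rewrite /F /=; apply: le_trans.
  by rewrite ler_pM2r // ler_nat.
have cap0 : \bigcap_n F n = set0.
  apply/seteqP; split=> x // /= Hx.
  have y0 : 0 <= `|f x| / eps by rewrite divr_ge0 // ltW.
  have /andP[_ t2] := truncn_itv y0.
  have := Hx (Num.truncn (`|f x| / eps)).+1 Logic.I; rewrite /F /=.
  by rewrite -ler_pdivlMr // leNgt t2.
have fin0 : (mu (F 0%N) < +oo)%E.
  exact: (le_lt_trans (probability_le1 _ (mF 0%N)) (ltry _)).
have := nonincreasing_cvg_mu (mu:=mu) fin0 mF.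
rewrite cap0 => /(_ measurable0 niF); rewrite measure0 => h.
have := cvg0_ev_le (fun n => measure_ge0 mu _) h _ ee.
case=> N _ HN; exists N; exact: (HN N (leqnn N)).
Qed.
End H4.

Arguments meas_ge {d X R h c}.
Arguments meas_lt {d X R h c}.
Arguments bad_small {d X R mu f eps e}.

Section H5.
Context d (X : measurableType d) (R : realType) (mu : probability X R).

Lemma chi_indic (W : set X) : chi R W = \1_W.
Proof.
apply/funext => x; rewrite /chi /indic; case: asboolP => h.
  by rewrite mem_set. by rewrite memNset.
Qed.

Lemma in_bigU N (F : 'I_N -> set X) j x : F j x -> (\big[setU/set0]_(i < N) F i) x.
Proof. by move=> h; rewrite (bigD1 j) //=; left. Qed.

Lemma forward (T : X -> X) (W : nat -> set X) (q : nat -> nat) (f : X -> R) :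
  measurable_fun setT T -> (forall A, measurable A -> mu (T @^-1` A) = mu A) ->
  (forall n, measurable (W n)) -> rigidity_along mu T q W -> measurable_fun setT f ->
  cvg_in_measure_to0 mu (fun n x => chi R (W n) x * (f (iter (q n) T x) - f x)).
Proof.
move=> mT pT mW rig mf eps e0.
apply: ev_le_cvg0 => // e ee.
have e4 : 0 < e / 4 by rewrite divr_gt0.
have e2 : 0 < e / 2 by rewrite divr_gt0.
have [K hK] := bad_small (mu:=mu) mf e0 e4.
set M := K%:R * eps in hK.
set B := [set x | M <= `|f x|] in hK.
have mB : measurable B by apply: meas_ge; exact: measurableT_comp.
pose L j := [set x | f x < - M + j%:R * eps].
have mL j : measurable (L j) by exact: meas_lt.
pose S j n := ((iter (q n) T @^-1` L j) `+` L j) `&` W n.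
have mS j n : measurable (S j n).
  apply: measurableI => //; apply: measurableU; apply: measurableD => //;
  exact: pre_meas (iter_mfun mT _) (mL j).
have cU := union_small (mu:=mu) (N:=2 * K) mS (fun j => rig _ (mL j)).
have := cvg0_ev_le (fun n => measure_ge0 mu _) cU _ e2.
apply: filterS => n hn.
set U := \big[setU/set0]_(j < 2 * K) S j n in hn.
have mU : measurable U by rewrite /U; elim/big_ind: _ => //; exact: measurableU.
have mTB : measurable (iter (q n) T @^-1` B) by exact: pre_meas (iter_mfun mT _) mB.
have mg : measurable_fun setT (fun x => chi R (W n) x * (f (iter (q n) T x) - f x)).
  rewrite chi_indic; apply: measurable_funM; first exact: measurable_indic.
  apply: measurable_funB => //; exact: measurableT_comp mf (iter_mfun mT _).
have mG : measurable [set x | eps <= `|chi R (W n) x * (f (iter (q n) T x) - f x)|].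
  apply: meas_ge; exact: measurableT_comp.
have sub : [set x | eps <= `|chi R (W n) x * (f (iter (q n) T x) - f x)|] `<=`
    (U `|` B) `|` (iter (q n) T @^-1` B).
  move=> x /=; rewrite /chi; case: asboolP => [hW|_]; last first.
    by rewrite mul0r normr0 => /(lt_le_trans e0); rewrite ltxx.
  rewrite mul1r => hx.
  set y := iter (q n) T x in hx *.
  case: (boolP (M <= `|f x|)) => hBx; first by left; right.
  case: (boolP (M <= `|f y|)) => hBy; first by right.
  left; left.
  rewrite -ltNge ltr_norml in hBx; rewrite -ltNge ltr_norml in hBy.
  case/andP: hBx => hx1 hx2; case/andP: hBy => hy1 hy2.
  case: (lerP (f x) (f y)) => hxy.
    rewrite ger0_norm ?subr_ge0 // in hx.
    have hxe : f x + eps <= f y by lra.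
    have [j [hj hj2]] := grid e0 hx1 hxe hy2.
    case/andP: hj2 => h1 h2.
    apply: (in_bigU _ _ (Ordinal hj)); split => //; right; split => //=.
    by rewrite -/y /M; apply/negP; rewrite -leNgt.
  rewrite ltr0_norm ?subr_lt0 // opprB in hx.
  have hxe : f y + eps <= f x by lra.
  have [j [hj hj2]] := grid e0 hy1 hxe hx2.
  case/andP: hj2 => h1 h2.
  apply: (in_bigU _ _ (Ordinal hj)); split => //; left; split => //=.
  by rewrite /L /M /=; apply/negP; rewrite -leNgt.
have mUB : measurable (U `|` B `|` iter (q n) T @^-1` B).
  by apply: measurableU => //; exact: measurableU.
apply: (le_trans (le_measure _ _ _ sub)); rewrite ?inE //.
apply: (le_trans (measureU2 _ _ _)) => //; first exact: measurableU.
have hp := (iter_pres mT pT (q n) B mB).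
apply: (@le_trans _ _ ((mu U + mu B) + mu B)%E).
  apply: leeD; first exact: measureU2.
  by rewrite le_eqVlt; apply/orP; left; apply/eqP; exact: hp.
have -> : e = e / 2 + e / 4 + e / 4 by lra.
by rewrite !EFinD; apply: leeD => //; apply: leeD.
Qed.
End H5.



Theorem lemma3p2 (d : measure_display) (X : measurableType d) (R : realType)
    (mu : probability X R) (T : X -> X) (W : nat -> set X) (q : nat -> nat) :
  standard_borel X R ->
  mp_automorphism mu T ->
  (forall n, measurable (W n)) ->
  {homo q : m n / (m < n)%N} ->
  rigidity_along mu T q W <->
  (forall f : X -> R, mu.-integrable setT (EFin \o f) ->
     cvg_in_measure_to0 mu
       (fun n x => chi R (W n) x * (f (iter (q n) T x) - f x))).
Proof.
move=> _ [_ mT _ pT] mW _; split.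
  move=> rig f /integrableP [mf _].
  apply: forward => //; exact/measurable_EFinP.
move=> H A mA.
have := H (\1_A) (integrable_indic mu mA) 1 ltr01.
suff -> : (fun n => mu ((iter (q n) T @^-1` A `+` A) `&` W n)) =
  (fun n => mu [set x | 1 <= `|chi R (W n) x * (\1_A (iter (q n) T x) - \1_A x)|]) by [].
apply/funext => n /=; congr (mu _).
apply/seteqP; split => x /=; rewrite /chi /indic /setY /setD;
  case: asboolP => hW; case: (pselect (A x)) => ha;
  case: (pselect (A (iter (q n) T x))) => hb;
  rewrite ?(mem_set ha) ?(memNset ha) ?(mem_set hb) ?(memNset hb) /=;
  rewrite ?mul0r ?mul1r ?subrr ?subr0 ?sub0r ?normrN ?normr0 ?normr1 ?lexx;
  try tauto; rewrite ?ler10 //=.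
Qed.
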